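(* Let $\theta,\eta\in(0,\tfrac{\pi}{4}]$ with $\theta\le\eta$, and let the qubits $A,C_1,C_2,B$ be in the state $|\Phi_\theta\rangle_{AC_1}\otimes|\Phi_\eta\rangle_{C_2B}$. Let $\{P_k\}_{k=1}^4$, $P_k=|\varphi_k\rangle\langle\varphi_k|$, be a projective measurement on $C_1C_2\cong\mathbb{C}^2\otimes\mathbb{C}^2$ with rank-one projectors. For each outcome $k$ with probability $p_k>0$, let $|\phi_k\rangle_{AB}$ be the post-measurement pure state of $AB$, and let $P_E(\phi_k)$ be twice the smallest eigenvalue of its reduced density operator on $A$ (the optimal two-party LOCC probability of converting $|\phi_k\rangle$ into a maximally entangled state). Then $$\sum_k p_k P_E(\phi_k)=2\sin^2\theta$$ (i.e. the measurement, followed by optimal LOCC between Alice and Bob, achieves the optimal entanglement concentration rate $\min\{2\sin^2\theta,2\sin^2\eta\}=2\sin^2\theta$) if and only if $$\sum_{k=1}^4\sqrt{\big(\mathrm{tr}((T_1\otimes T_2)P_k)\big)^2+\sin^2 2\theta\,\big|\mathrm{tr}((|0\rangle\langle1|\otimes T_2)P_k)\big|^2}=\cos2\theta,$$ where $T_1=\cos^2\theta|0\rangle\langle0|-\sin^2\theta|1\rangle\langle1|$ and $T_2=\cos^2\eta|0\rangle\langle0|+\sin^2\eta|1\rangle\langle1|$, with the first tensor factor acting on $C_1$ and the second on $C_2$.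
   Context: For $\lambda\in[0,\tfrac{\pi}{2}]$, $|\Phi_\lambda\rangle=\cos\lambda|00\rangle+\sin\lambda|11\rangle$. Alice holds qubit $A$, Clare holds $C_1$ (initially entangled with $A$) and $C_2$ (initially entangled with $B$), Bob holds $B$. The post-measurement state for outcome $k$ is $|\phi_k\rangle_{AB}=p_k^{-1/2}(\langle\varphi_k|_{C_1C_2}\otimes I_{AB})|\Phi_\theta\rangle_{AC_1}|\Phi_\eta\rangle_{C_2B}$ with $p_k$ the squared norm of the unnormalized vector. *)

(* Defs.v *)
(* real numbers with sin/cos/sqrt; complex numbers are
   represented concretely as pairs of reals. Qubit indices are bool
   (false = |0>, true = |1>). *)
From Stdlib Require Import Reals.
Open Scope R_scope.

Record C := mkC { Cre : R ; Cim : R }.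
Definition RtoC (x : R) : C := mkC x 0.
Definition C0 : C := RtoC 0.
Definition C1 : C := RtoC 1.
Definition Cadd (z w : C) : C := mkC (Cre z + Cre w) (Cim z + Cim w).
Definition Cmul (z w : C) : C :=
  mkC (Cre z * Cre w - Cim z * Cim w) (Cre z * Cim w + Cim z * Cre w).
Definition Cconj (z : C) : C := mkC (Cre z) (- Cim z).
Definition Cscale (r : R) (z : C) : C := mkC (r * Cre z) (r * Cim z).
Definition Cnorm2 (z : C) : R := Cre z * Cre z + Cim z * Cim z.

Definition sumbC (f : bool -> C) : C := Cadd (f false) (f true).
Definition sumbR (f : bool -> R) : R := f false + f true.

(* vectors in C^2 (x) C^2, indexed by (c1, c2) *)
Definition Vec4 := bool -> bool -> C.
Definition Mat2 := bool -> bool -> C.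
Definition Mat4 := (bool * bool) -> (bool * bool) -> C.

Definition kron (X Y : Mat2) : Mat4 :=
  fun i j => Cmul (X (fst i) (fst j)) (Y (snd i) (snd j)).

Definition proj (v : Vec4) : Mat4 :=
  fun i j => Cmul (v (fst i) (snd i)) (Cconj (v (fst j) (snd j))).

Definition sum4 (f : bool * bool -> C) : C :=
  sumbC (fun a => sumbC (fun b => f (a, b))).

Definition mmul4 (X Y : Mat4) : Mat4 :=
  fun i j => sum4 (fun l => Cmul (X i l) (Y l j)).

Definition trace4 (X : Mat4) : C := sum4 (fun i => X i i).

Definition inner4 (v w : Vec4) : C :=
  sumbC (fun a => sumbC (fun b => Cmul (Cconj (v a b)) (w a b))).

(* {phi k}_{k=0..3} is an orthonormal basis of C^2 (x) C^2, i.e. the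
   projectors P_k = |phi k><phi k| form a projective measurement with
   rank-one projectors (four orthonormal vectors in C^4 automatically
   resolve the identity). Outcomes are indexed 0..3 (paper: 1..4). *)
Definition orthonormal4 (phi : nat -> Vec4) : Prop :=
  forall k l : nat, (k < 4)%nat -> (l < 4)%nat ->
    inner4 (phi k) (phi l) = if Nat.eqb k l then C1 else C0.

Definition Phi (lam : R) (x y : bool) : C :=
  if Bool.eqb x y then RtoC (if x then sin lam else cos lam) else C0.

(* unnormalized post-measurement vector on AB for outcome phi_k:
   (<phi_k|_{C1C2} (x) I_{AB}) |Phi_theta>_{AC1} |Phi_eta>_{C2B} *)
Definition post_unnorm (theta eta : R) (v : Vec4) (a b : bool) : C :=
  sumbC (fun c1 => sumbC (fun c2 =>
    Cmul (Cconj (v c1 c2)) (Cmul (Phi theta a c1) (Phi eta c2 b)))).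

Definition prob (theta eta : R) (v : Vec4) : R :=
  sumbR (fun a => sumbR (fun b => Cnorm2 (post_unnorm theta eta v a b))).

Definition post_state (theta eta : R) (v : Vec4) (a b : bool) : C :=
  Cscale (/ sqrt (prob theta eta v)) (post_unnorm theta eta v a b).

Definition rhoA (psi : bool -> bool -> C) : Mat2 :=
  fun a a' => sumbC (fun b => Cmul (psi a b) (Cconj (psi a' b))).

(* eigenvalues of a 2x2 matrix X are the roots of its characteristic
   polynomial t^2 - tr(X) t + det(X); for Hermitian X these are real and
   the smallest one is (tr - sqrt(tr^2 - 4 det))/2. *)
Definition trace2 (X : Mat2) : C := Cadd (X false false) (X true true).
Definition det2 (X : Mat2) : C :=
  Cadd (Cmul (X false false) (X true true))
       (Cscale (-1) (Cmul (X false true) (X true false))).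
Definition lambda_min2 (X : Mat2) : R :=
  (Cre (trace2 X) - sqrt (Cre (trace2 X) ^ 2 - 4 * Cre (det2 X))) / 2.

Definition P_E (psi : bool -> bool -> C) : R := 2 * lambda_min2 (rhoA psi).

Definition avg_PE (theta eta : R) (phi : nat -> Vec4) : R :=
  sum_f_R0 (fun k =>
    let p := prob theta eta (phi k) in
    if Rlt_dec 0 p then p * P_E (post_state theta eta (phi k)) else 0) 3.

Definition diag2 (x y : R) : Mat2 :=
  fun i j => if Bool.eqb i j then RtoC (if i then y else x) else C0.
Definition T1 (theta : R) : Mat2 := diag2 (cos theta ^ 2) (- sin theta ^ 2).
Definition T2 (eta : R) : Mat2 := diag2 (cos eta ^ 2) (sin eta ^ 2).
Definition ket0bra1 : Mat2 :=
  fun i j => if (negb i && j)%bool then C1 else C0.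

Definition criterion_sum (theta eta : R) (phi : nat -> Vec4) : R :=
  sum_f_R0 (fun k =>
    sqrt (Cre (trace4 (mmul4 (kron (T1 theta) (T2 eta)) (proj (phi k)))) ^ 2
          + sin (2 * theta) ^ 2
            * Cnorm2 (trace4 (mmul4 (kron ket0bra1 (T2 eta)) (proj (phi k))))))
    3.

(* Main.v *)
Require Import Defs.
From Stdlib Require Import Reals Lra.
Open Scope R_scope.

Definition Sk (theta eta : R) (v : Vec4) : R :=
  Cre (trace2 (rhoA (post_unnorm theta eta v))) ^ 2
  - 4 * Cre (det2 (rhoA (post_unnorm theta eta v))).

Lemma crit_term theta eta v :
  Cre (trace4 (mmul4 (kron (T1 theta) (T2 eta)) (proj v))) ^ 2
          + sin (2 * theta) ^ 2
            * Cnorm2 (trace4 (mmul4 (kron ket0bra1 (T2 eta)) (proj v)))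
  = Sk theta eta v.
Proof.
  rewrite sin_2a.
  unfold Sk, trace4, mmul4, kron, T1, T2, ket0bra1, proj, diag2, sum4, sumbC,
    trace2, det2, rhoA, post_unnorm, Phi, Cnorm2; simpl.
  ring.
Qed.

Lemma prob_tr theta eta v : prob theta eta v = Cre (trace2 (rhoA (post_unnorm theta eta v))).
Proof. unfold prob, trace2, rhoA, sumbR, sumbC, Cnorm2. simpl. ring. Qed.

Lemma det_nonneg (x : bool -> bool -> Defs.C) : 0 <= Cre (det2 (rhoA x)).
Proof.
  assert (E : Cre (det2 (rhoA x)) = Cnorm2 (Cadd (Cmul (x false false) (x true true))
            (Cscale (-1) (Cmul (x false true) (x true false))))).
  { unfold det2, rhoA, Cnorm2, sumbC. simpl. ring. }
  rewrite E; unfold Cnorm2; nra.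
Qed.

Lemma scale_tr (x : bool -> bool -> Defs.C) s :
  Cre (trace2 (rhoA (fun a b => Cscale s (x a b)))) = s^2 * Cre (trace2 (rhoA x)).
Proof. unfold trace2, rhoA, sumbC. simpl. ring. Qed.

Lemma scale_det (x : bool -> bool -> Defs.C) s :
  Cre (det2 (rhoA (fun a b => Cscale s (x a b)))) = s^4 * Cre (det2 (rhoA x)).
Proof. unfold det2, rhoA, sumbC. simpl. ring. Qed.

Lemma Sk_nonneg theta eta v : 0 <= Sk theta eta v.
Proof.
  rewrite <- crit_term. apply Rplus_le_le_0_compat.
  apply pow2_ge_0. apply Rmult_le_pos. apply pow2_ge_0.
  unfold Cnorm2; nra.
Qed.

Lemma avg_term theta eta v :
  (let p := prob theta eta v in
    if Rlt_dec 0 p then p * P_E (post_state theta eta v) else 0)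
  = prob theta eta v - sqrt (Sk theta eta v).
Proof.
  cbv zeta.
  pose proof (Sk_nonneg theta eta v) as HS.
  pose proof (det_nonneg (post_unnorm theta eta v)) as HD.
  unfold Sk in *. rewrite <- prob_tr in *.
  set (D := Cre (det2 (rhoA (post_unnorm theta eta v)))) in *.
  set (p := prob theta eta v) in *.
  destruct (Rlt_dec 0 p) as [Hp|Hp].
  - unfold P_E, lambda_min2, post_state.
    rewrite scale_tr, scale_det. fold D. rewrite <- prob_tr. fold p.
    assert (Hs : (/ sqrt p) ^ 2 = / p).
    { rewrite pow_inv, <- Rsqr_pow2, Rsqr_sqrt; lra. }
    replace ((/ sqrt p) ^ 4) with (((/ sqrt p) ^ 2) ^ 2) by ring.
    rewrite Hs.
    replace (p ^ 2 - 4 * D) with (p^2 * ((/ p * p) ^ 2 - 4 * ((/ p) ^ 2 * D))).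
    2:{ field. lra. }
    rewrite sqrt_mult_alt by (apply pow2_ge_0).
    rewrite (sqrt_pow2 p) by lra.
    field. lra.
  - assert (p = 0).
    { assert (0 <= p).
      { unfold p, prob, sumbR, Cnorm2.
        repeat apply Rplus_le_le_0_compat; apply Rle_0_sqr. }
      lra. }
    assert (Hz : p ^ 2 - 4 * D = 0) by (rewrite H in *; nra).
    rewrite Hz, sqrt_0. lra.
Qed.

Lemma prob_expand theta eta v : prob theta eta v =
  cos theta ^ 2 * cos eta ^ 2 * Cnorm2 (v false false) +
  cos theta ^ 2 * sin eta ^ 2 * Cnorm2 (v false true) +
  sin theta ^ 2 * cos eta ^ 2 * Cnorm2 (v true false) +
  sin theta ^ 2 * sin eta ^ 2 * Cnorm2 (v true true).
Proof. unfold prob, sumbR, post_unnorm, sumbC, Phi, Cnorm2. simpl. ring. Qed.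

Lemma main_gen (theta eta : R) (phi : nat -> Vec4) :
  (forall a b, sum_f_R0 (fun k => Cnorm2 (phi k a b)) 3 = 1) ->
  (avg_PE theta eta phi = 2 * sin theta ^ 2 <->
   criterion_sum theta eta phi = cos (2 * theta)).
Proof.
  intros Hc.
  assert (Hp : sum_f_R0 (fun k => prob theta eta (phi k)) 3 = 1).
  { simpl. rewrite !prob_expand.
    pose proof (Hc false false) as H1. pose proof (Hc false true) as H2.
    pose proof (Hc true false) as H3. pose proof (Hc true true) as H4.
    simpl in H1, H2, H3, H4.
    pose proof (sin2_cos2 theta) as St. pose proof (sin2_cos2 eta) as Se.
    unfold Rsqr in St, Se.
    set (ct := cos theta ^ 2) in *. set (st := sin theta ^ 2) in *.
    set (ce := cos eta ^ 2) in *. set (se := sin eta ^ 2) in *.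
    assert (st = 1 - ct) by (unfold st, ct; simpl; lra).
    assert (se = 1 - ce) by (unfold se, ce; simpl; lra).
    transitivity (ct * ce * (Cnorm2 (phi 0%nat false false) + Cnorm2 (phi 1%nat false false) + Cnorm2 (phi 2%nat false false) + Cnorm2 (phi 3%nat false false))
      + ct * se * (Cnorm2 (phi 0%nat false true) + Cnorm2 (phi 1%nat false true) + Cnorm2 (phi 2%nat false true) + Cnorm2 (phi 3%nat false true))
      + st * ce * (Cnorm2 (phi 0%nat true false) + Cnorm2 (phi 1%nat true false) + Cnorm2 (phi 2%nat true false) + Cnorm2 (phi 3%nat true false))
      + st * se * (Cnorm2 (phi 0%nat true true) + Cnorm2 (phi 1%nat true true) + Cnorm2 (phi 2%nat true true) + Cnorm2 (phi 3%nat true true))).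
    - ring.
    - rewrite H1, H2, H3, H4. rewrite H, H0. ring. }
  assert (Ha : avg_PE theta eta phi = 1 - sum_f_R0 (fun k => sqrt (Sk theta eta (phi k))) 3).
  { unfold avg_PE. cbn [sum_f_R0] in Hp |- *. rewrite !avg_term. lra. }
  assert (Hcr : criterion_sum theta eta phi = sum_f_R0 (fun k => sqrt (Sk theta eta (phi k))) 3).
  { unfold criterion_sum. cbn [sum_f_R0]. rewrite !crit_term. reflexivity. }
  rewrite Ha, Hcr, cos_2a_sin. split; intro; lra.
Qed.
From mathcomp Require Import all_boot all_algebra.
From mathcomp Require Import complex Rstruct ring.
Import GRing.Theory.

Local Open Scope ring_scope.

Definition toC (z : Defs.C) : R[i] := Complex (Cre z) (Cim z).

Lemma toC_mul z w : toC (Cmul z w) = toC z * toC w.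
Proof. destruct z, w. reflexivity. Qed.
Lemma toC_add z w : toC (Cadd z w) = toC z + toC w.
Proof. destruct z, w. reflexivity. Qed.
Lemma toC_conj z : toC (Cconj z) = (toC z)^*%C.
Proof. destruct z. reflexivity. Qed.

Definition abi (i : 'I_4) : bool * bool := ((2 <= i)%N, odd i).

Section Comp.
Variable phi : nat -> Vec4.
Hypothesis Hon : orthonormal4 phi.

Definition ent (k i : 'I_4) : R[i] := toC (phi k (abi i).1 (abi i).2).
Definition MA : 'M[R[i]]_4 := \matrix_(k, i) ent k i.
Definition MB : 'M[R[i]]_4 := \matrix_(i, k) (ent k i)^*%C.

Lemma AB : MA *m MB = 1%:M.
Proof.
  apply/matrixP => k l. rewrite !mxE.
  have H := Hon l k (elimT ltP (ltn_ord l)) (elimT ltP (ltn_ord k)).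
  have -> : \sum_j MA k j * MB j l = toC (inner4 (phi l) (phi k)).
  { rewrite !big_ord_recl big_ord0 /MA /MB !mxE /ent /=.
    rewrite /inner4 /sumbC !toC_add !toC_mul !toC_conj.
    rewrite addr0 !addrA. congr (_ + _ + _ + _); apply: mulrC. }
  rewrite H. case: (eqVneq k l) => [->|ne].
  - by rewrite PeanoNat.Nat.eqb_refl mulr1n.
  - have -> : Nat.eqb l k = false.
    { apply/PeanoNat.Nat.eqb_neq => e. move/eqP: ne; apply. apply: val_inj. by rewrite /= e. }
    by rewrite mulr0n.
Qed.

Lemma BA : MB *m MA = 1%:M.
Proof. exact: mulmx1C AB. Qed.

Lemma colsum (i : 'I_4) :
  (sum_f_R0 (fun k => Cnorm2 (phi k (abi i).1 (abi i).2)) 3 = 1)%R.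
Proof.
  have := congr1 (fun M : 'M[R[i]]_4 => Re (M i i)) BA.
  rewrite !mxE eqxx /= big_ord_recl big_ord_recl big_ord_recl big_ord_recl big_ord0.
  rewrite /MB /MA !mxE /ent /=.
  rewrite /bump /= => H. rewrite -H /Cnorm2 !RplusE !RmultE. ring.
Qed.
End Comp.

Lemma colsum_ab (phi : nat -> Vec4) : orthonormal4 phi ->
  forall a b, (sum_f_R0 (fun k => Cnorm2 (phi k a b)) 3 = 1)%R.
Proof.
  move=> Hon [] [].
  - exact: (@colsum phi Hon (@Ordinal 4 3 isT)).
  - exact: (@colsum phi Hon (@Ordinal 4 2 isT)).
  - exact: (@colsum phi Hon (@Ordinal 4 1 isT)).
  - exact: (@colsum phi Hon (@Ordinal 4 0 isT)).
Qed.

Open Scope R_scope.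

Theorem theorem2 (theta eta : R) (phi : nat -> Vec4) :
  0 < theta -> theta <= eta -> eta <= PI / 4 ->
  orthonormal4 phi ->
  (avg_PE theta eta phi = 2 * sin theta ^ 2 <->
   criterion_sum theta eta phi = cos (2 * theta)).
Proof.
  move=> _ _ _ Hon. apply: main_gen. exact: colsum_ab.
Qed.
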